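(* Let $n\ge 3$ and $v\in A_n$. Let $v=v_3\cdots v_n$ be the unique factorization with $v_i\in R_i$ for $3\le i\le n$, and set $\hat\ell(v)=\#\{i\mid v_i\neq e\}$. Then $\hat\ell(v)=\ell_{T(A_n)}(v)$.
   Context: $A_n$ is the alternating group on $\{1,\dots,n\}$, $e$ the identity, and products are compositions of permutations with the rightmost factor applied first; $A_i$ for $i\le n$ is the subgroup fixing $i+1,\dots,n$. $T(A_n)=\{(1\,2)(i\,j)\mid 1\le i<j\le n\}$, and for $v\in A_n$, $\ell_{T(A_n)}(v)=\min\{k\ge 0\mid v=t_1\cdots t_k,\ t_i\in T(A_n)\}$. For $3\le i\le n$, $R_i=\{(1\,2)(k\,i)\mid 1\le k<i\}\cup\{e\}$. Every $v\in A_n$ has a unique factorization $v=v_3\cdots v_n$ with $v_i\in R_i$. *)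

(* Defs.v *)
From mathcomp Require Import all_boot fingroup perm alt.
Set Implicit Arguments. Unset Strict Implicit. Unset Printing Implicit Defensive.
Local Open Scope group_scope.

(* Points 1..n of the paper are the ordinals 0..n-1 of 'I_n (point k <-> ordinal k-1). *)

(* Paper product convention: (a . b) applies b first.  MathComp's (b * a) x = a (b x),
   so paper product a . b is MathComp b * a.  pprod [:: t1; ...; tk] = t1 . ... . tk. *)
Definition pprod (T : finType) (s : seq {perm T}) : {perm T} :=
  foldr (fun a acc => acc * a) 1 s.

Definition ttrans (n : nat) (a b i j : 'I_n) : {perm 'I_n} :=
  pprod [:: tperm a b; tperm i j].

Definition TA (n : nat) : {set {perm 'I_n}} :=
  [set s | [exists a : 'I_n, exists b : 'I_n, exists i : 'I_n, exists j : 'I_n,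
     [&& (val a == 0)%N, (val b == 1)%N, (i < j)%N & s == ttrans a b i j]]].

Definition is_lengthT (n : nat) (v : {perm 'I_n}) (k : nat) : Prop :=
  (exists s : seq {perm 'I_n}, all (fun t => t \in TA n) s /\ pprod s = v /\ size s = k)
  /\ (forall s : seq {perm 'I_n}, all (fun t => t \in TA n) s -> pprod s = v -> (k <= size s)%N).

Definition RA (n : nat) (i : 'I_n) : {set {perm 'I_n}} :=
  [set s | (s == 1) || [exists a : 'I_n, exists b : 'I_n, exists k : 'I_n,
     [&& (val a == 0)%N, (val b == 1)%N, (k < i)%N & s == ttrans a b k i]]].

(* Main.v *)
Require Import Defs.
From mathcomp Require Import all_boot fingroup perm alt.
From mathcomp Require Import zify.
Set Implicit Arguments. Unset Strict Implicit. Unset Printing Implicit Defensive.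
Local Open Scope group_scope.

Section C.
Variable T : finType.
Implicit Types (s w : {perm T}) (x y : T).
Definition cc s := #|porbits s|.

Lemma R s x y : cc (s * tperm x y) + (x \notin porbit s y).*2 = cc s + (x != y).
Proof.
have := porbits_mul_tperm s^-1 x y; rewrite /= porbitV porbitsV /cc.
by rewrite -(porbitsV (s * _)) invMg tpermV.
Qed.

Lemma L s x y : cc (tperm x y * s) + (x \notin porbit s y).*2 = cc s + (x != y).
Proof. exact: porbits_mul_tperm. Qed.

Lemma fix_orbit s x y : s y = y -> x \in porbit s y -> x = y.
Proof. by move=> hy /porbitP[i ->]; rewrite permX_fix. Qed.

Lemma Rge s x y : cc s <= (cc (s * tperm x y)).+1.
Proof. have [->|nxy] := eqVneq x y; first by rewrite tperm1 mulg1. have := R s x y; rewrite nxy -mul2n; case: (x \notin _) => /=; lia. Qed.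

Lemma AC s x y : cc (s * tperm x y) = cc (tperm x y * s).
Proof. have := R s x y; have := L s x y; rewrite -!mul2n; lia. Qed.

Lemma BC s x y : cc (tperm x y * s * tperm x y) = cc s.
Proof. by rewrite AC mulgA tperm2 mul1g. Qed.

Lemma conj_id x y i j : tperm i j * tperm x y = tperm x y * tperm (tperm x y i) (tperm x y j).
Proof. by rewrite -tpermJ conjgE tpermV mulgA tperm2 mul1g. Qed.
End C.

Lemma pprod_cons (T : finType) (x : {perm T}) s : pprod (x :: s) = pprod s * x.
Proof. by []. Qed.

Lemma pprod_filter1 (T : finType) (s : seq {perm T}) :
  pprod [seq x <- s | x != 1] = pprod s.
Proof.
elim: s => // x s IH; rewrite pprod_cons -IH; by have [->|nx] := eqVneq x 1; rewrite /= ?eqxx ?nx ?mulg1.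
Qed.

Lemma ttransE n (a b i j : 'I_n) : ttrans a b i j = tperm i j * tperm a b.
Proof. by rewrite /ttrans /pprod /= mul1g. Qed.

Section Main.
Variable n : nat.
Hypothesis hn : (3 <= n)%N.
Definition p0 : 'I_n := Ordinal (leq_trans (isT : 0 < 3)%N hn).
Definition p1 : 'I_n := Ordinal (leq_trans (isT : 1 < 3)%N hn).
Definition SS (w : {perm 'I_n}) := cc w + cc (w * tperm p0 p1).

Lemma eq_p0 (a : 'I_n) : val a = 0%N -> a = p0.
Proof. by move=> h; apply: val_inj. Qed.
Lemma eq_p1 (a : 'I_n) : val a = 1%N -> a = p1.
Proof. by move=> h; apply: val_inj. Qed.

Lemma lower_step v t : t \in TA n -> (SS v <= SS (v * t) + 2)%N.
Proof.
rewrite inE => /existsP[a /existsP[b /existsP[i /existsP[j /and4P[/eqP ha /eqP hb _ /eqP ->]]]]].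
rewrite ttransE (eq_p0 ha) (eq_p1 hb) /SS.
rewrite mulgA -(mulgA (v * tperm i j)) tperm2 mulg1 -mulgA conj_id mulgA.
have := Rge v i j; have := Rge (v * tperm p0 p1) (tperm p0 p1 i) (tperm p0 p1 j).
move=> h1 h2; apply: leq_trans (leq_add h2 h1) _; by rewrite addSn addnS addnC addn2.
Qed.

Lemma lower_bound s : all (fun t => t \in TA n) s -> (SS 1 <= SS (pprod s) + 2 * size s)%N.
Proof.
elim: s => [|t s IH]; first by rewrite addn0.
move=> /andP[ht /IH h]; rewrite pprod_cons; have := lower_step (pprod s) ht.
rewrite /= mulnS addnA => hs; apply: leq_trans h _; by rewrite leq_add2r.
Qed.

Lemma fix01 (z : 'I_n) : (2 <= val z)%N -> tperm p0 p1 z = z.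
Proof.
move=> hz; have hz2 : (2 <= nat_of_ord z)%N := hz. apply: tpermD; apply/eqP => /(congr1 val) /= h; lia.
Qed.

Lemma up_step (i k : 'I_n) (w : {perm 'I_n}) : (2 <= val i)%N -> (val k < val i)%N -> w i = i ->
  (SS (tperm k i * tperm p0 p1 * w) + 2 = SS w)%N.
Proof.
move=> h2 hk hw; have h2' : (2 <= nat_of_ord i)%N := h2; have hk' : (nat_of_ord k < nat_of_ord i)%N := hk.
have nki : k != i by apply/eqP => /(congr1 val) /= h; lia.
have Hs : (tperm p0 p1 * w) i = i by rewrite permM fix01.
have Hs' : (tperm p0 p1 * w * tperm p0 p1) i = i by rewrite permM Hs fix01.
have nin : forall s : {perm 'I_n}, s i = i -> k \notin porbit s i.
  by move=> s hs; apply/negP => /(fix_orbit hs) /eqP; rewrite (negbTE nki).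
have := L (tperm p0 p1 * w) k i; rewrite nin // nki.
have := L (tperm p0 p1 * w * tperm p0 p1) k i; rewrite nin // nki.
rewrite BC /SS -!mulgA -(AC w) /= !mulgA.
set B := cc (tperm k i * tperm p0 p1 * w * tperm p0 p1); set A := cc (tperm k i * tperm p0 p1 * w); set D := cc (w * tperm p0 p1); set C := cc w; rewrite -!mul2n; lia.
Qed.

Lemma RA_cases (i : 'I_n) x : x \in RA i ->
  x = 1 \/ exists k : 'I_n, (val k < val i)%N /\ x = tperm k i * tperm p0 p1.
Proof.
rewrite inE => /orP[/eqP->|/existsP[a/existsP[b/existsP[k/and4P[/eqP ha /eqP hb hk /eqP ->]]]]].
  by left.
by right; exists k; split => //; rewrite ttransE (eq_p0 ha) (eq_p1 hb).
Qed.

Lemma fact_lemma (f : 'I_n -> {perm 'I_n})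
  (hf : forall i : 'I_n, (2 <= val i)%N -> f i \in RA i) (l : seq 'I_n) :
  sorted (fun a b : 'I_n => val a < val b)%N l -> all (fun i : 'I_n => 2 <= val i)%N l ->
  forall w : {perm 'I_n}, (forall (z i : 'I_n), i \in l -> (val i <= val z)%N -> w z = z) ->
  (SS (pprod (map f l) * w) + 2 * count (fun i => f i != 1%g) l = SS w)%N.
Proof.
elim: l => [|i l IH] hs ha w hw; first by rewrite mul1g addn0.
have -> : pprod (map f (i :: l)) = pprod (map f l) * f i by [].
have tr : transitive (fun a b : 'I_n => val a < val b)%N.
  by move=> ? ? ? ; apply: ltn_trans.
have hli := order_path_min tr hs.
move: ha => /andP[hi ha].
have wi : w i = i by apply: (hw i i); rewrite ?mem_head ?leqnn.
have fiz : forall z : 'I_n, (val i < val z)%N -> f i z = z.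
  move=> z hz; case: (RA_cases (hf i hi)) => [->|[k [hk ->]]]; first by rewrite perm1.
  have hz' : (nat_of_ord i < nat_of_ord z)%N := hz.
  have hk' : (nat_of_ord k < nat_of_ord i)%N := hk.
  have hiz : i != z by apply/eqP => /(congr1 val) /= h; lia.
  have hkz : k != z by apply/eqP => /(congr1 val) /= h; lia.
  by rewrite permM (tpermD hkz hiz) fix01 // (leq_trans hi (ltnW hz)).
have hw' : forall (z j : 'I_n), j \in l -> (val j <= val z)%N -> (f i * w) z = z.
  move=> z j hj hjz; have hiz := leq_trans (allP hli j hj) hjz.
  by rewrite permM fiz // (hw z i) ?mem_head // ltnW.
have E := IH (path_sorted hs) ha (f i * w) hw'.
rewrite -mulgA /= mulnDr addnCA E.
case: (RA_cases (hf i hi)) => [->|[k [hk ->]]].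
  by rewrite mul1g eqxx muln0 add0n.
have -> : (tperm k i * tperm p0 p1 != 1) = true.
  apply/eqP => h; move: (up_step hi hk (perm1 i)); rewrite h mulg1.
  move=> /eqP; rewrite -{2}(addn0 (SS 1)) eqn_add2l //.
by rewrite muln1 addnC up_step.
Qed.
End Main.

Theorem theorem4p6 (n : nat) (hn : (3 <= n)%N) (v : {perm 'I_n})
  (hv : v \in 'Alt_('I_n))
  (f : 'I_n -> {perm 'I_n})
  (hf : forall i : 'I_n, (2 <= val i)%N -> f i \in RA i)
  (hfact : v = pprod [seq f i | i <- enum 'I_n & (2 <= val i)%N]) :
  is_lengthT v #|[set i : 'I_n | (2 <= val i)%N & f i != 1]|.
Proof.
set l0 := [seq i <- enum 'I_n | (2 <= val i)%N].
have hcard : #|[set i : 'I_n | (2 <= val i)%N & f i != 1]| = count (fun i => f i != 1) l0.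
  rewrite count_filter cardsE cardE /enum_mem size_filter count_filter.
  by apply: eq_count => x /=; rewrite !inE unfold_in /= andbC andbT.
rewrite hcard.
have hs : sorted (fun a b : 'I_n => val a < val b)%N l0.
  apply: sorted_filter; first by move=> ? ? ?; apply: ltn_trans.
  have : sorted ltn (map val (enum 'I_n)) by rewrite val_enum_ord iota_ltn_sorted.
  by rewrite sorted_map.
have ha : all (fun i : 'I_n => 2 <= val i)%N l0 by apply: filter_all.
have E := fact_lemma hn hf hs ha (w := 1) (fun z i _ _ => perm1 z).
rewrite mulg1 -hfact in E.
split.
  exists [seq x <- map f l0 | x != 1]; split; last split.
  - apply/allP => x; rewrite mem_filter => /andP[nx /mapP[i]].
    rewrite mem_filter => /andP[hi _] hx; rewrite {}hx in nx *.
    move: (hf i hi); rewrite inE => /orP[|/existsP[a/existsP[b/existsP[k/and4P[ha' hb hk hx]]]]].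
      by rewrite inE (negbTE nx).
    by rewrite inE; apply/existsP; exists a; apply/existsP; exists b; apply/existsP; exists k;
       apply/existsP; exists i; rewrite ha' hb hk hx.
  - by rewrite pprod_filter1 hfact.
  - by rewrite size_filter count_map.
move=> s hsT hps.
have := lower_bound hn hsT; rewrite hps -E.
rewrite leq_add2l => h.
by rewrite -(leq_pmul2l (isT : 0 < 2)%N).
Qed.
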